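(* Let $r_1,r_2,r_3,L>0$ with $r_2>\max(r_1,r_3)$. For positive $a,b$ with $r_2>\max(a,b)$ let $m_{a,b}(y)=a\mathbf 1_{y<0}+r_2\mathbf 1_{0\le y<1}+b\mathbf 1_{y\ge1}$ and $\lambda_1(a,b)=\sup\{\lambda : \exists\,\varphi\in W^{2,1}_{\mathrm{loc}}(\mathbb{R}),\ \varphi>0,\ L^{-2}\varphi''+(m_{a,b}+\lambda)\varphi\le0\}$. Then $\lambda_1(r_1,r_3)=\lambda_1(r_3,r_1)$. *)

(* Defs.v *)
From HB Require Import structures.
From mathcomp Require Import all_boot all_order all_algebra.
From mathcomp Require Import all_classical all_reals all_analysis.
Set Implicit Arguments. Unset Strict Implicit. Unset Printing Implicit Defensive.
Import Order.TTheory GRing.Theory Num.Theory.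
Import numFieldNormedType.Exports.
Local Open Scope classical_set_scope.
Local Open Scope ring_scope.

Section Defs.
Context {R : realType}.
Local Notation mu := (@lebesgue_measure R).

Definition test_fun (psi : R -> R) : Prop :=
  (forall (n : nat) (x : R), derivable (derive1n n psi) x 1) /\
  (exists M : R, forall x : R, M < `|x| -> psi x = 0).

Definition weak_deriv1 (phi g : R -> R) : Prop :=
  forall psi, test_fun psi ->
    (\int[mu]_x (phi x * derive1n 1 psi x)%:E = - \int[mu]_x (g x * psi x)%:E)%E.

Definition weak_deriv2 (phi g : R -> R) : Prop :=
  forall psi, test_fun psi ->
    (\int[mu]_x (phi x * derive1n 2 psi x)%:E = \int[mu]_x (g x * psi x)%:E)%E.

Definition W21loc_with (phi phi2 : R -> R) : Prop :=
  locally_integrable setT phi /\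
  (exists phi1 : R -> R, locally_integrable setT phi1 /\ weak_deriv1 phi phi1) /\
  locally_integrable setT phi2 /\ weak_deriv2 phi phi2.

Definition m_ab (r2 a b : R) (y : R) : R :=
  if y < 0 then a else if y < 1 then r2 else b.

(* admissible lambda: exists phi in W^{2,1}_loc (continuous representative),
   phi > 0, with L^{-2} phi'' + (m_{a,b} + lambda) phi <= 0 a.e. *)
Definition admissible (r2 L a b lam : R) : Prop :=
  exists phi phi2 : R -> R,
    continuous phi /\ (forall x, 0 < phi x) /\ W21loc_with phi phi2 /\
    {ae mu, forall x, L^-2 * phi2 x + (m_ab r2 a b x + lam) * phi x <= 0}.

Definition lambda1 (r2 L a b : R) : \bar R :=
  ereal_sup [set lam%:E | lam in [set lam : R | admissible r2 L a b lam]].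
End Defs.

(* Main.v *)
Require Import Defs.
From HB Require Import structures.
From mathcomp Require Import all_boot all_order all_algebra.
From mathcomp Require Import all_classical all_reals all_analysis.
From mathcomp Require Import ring lra measurable_realfun.
Import Order.TTheory GRing.Theory Num.Theory.
Import numFieldNormedType.Exports.
Local Open Scope ring_scope.

Section S.
Local Open Scope classical_set_scope.
Context {R : realType}.
Local Notation mu := (@lebesgue_measure R).
Definition sref (x : R) : R := 1 - x.

Lemma sref_meas : measurable_fun [set: measurableTypeR R] (sref : measurableTypeR R -> measurableTypeR R).
Proof. by apply: continuous_measurable_fun => x; apply: continuousB; [exact: cvg_cst|exact: cvg_id]. Qed.

Lemma lebesgue_sref (A : set (measurableTypeR R)) : measurable A ->
  pushforward mu (sref : _ -> measurableTypeR R) A = mu A.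
Proof.
move=> mA; apply/esym/lebesgue_measure_unique => //=; first exact: sref_meas.
move=> _ _ [[a b]] _ <-.
rewrite /pushforward.
have -> : sref @^-1` `]a, b]%classic = `[1 - b, 1 - a[%classic.
  apply/seteqP; split => x /=; rewrite /sref !in_itv /= => /andP[h1 h2];
    apply/andP; split; lra.
rewrite !lebesgue_measure_itv/= !lte_fin.
have -> : (1 - b < 1 - a) = (a < b) by rewrite ltrD2l ltrN2.
by case: ifP => // _; rewrite -!EFinD; congr (_%:E); ring.
Qed.

Lemma integral_sref (D : set R) (f : R -> \bar R) : measurable D ->
  measurable_fun [set: R] f ->
  (\int[mu]_(x in D) f x = \int[mu]_(x in sref @^-1` D) f (sref x))%E.
Proof.
move=> mD mf.
have E1 g : measurable_fun [set: R] g -> (forall x, (0 <= g x)%E) ->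
    (\int[mu]_(x in D) g x = \int[mu]_(x in sref @^-1` D) g (sref x))%E.
  move=> mg g0.
  have := ge0_integral_pushforward sref_meas (@lebesgue_measure R) mD (measurable_funTS mg) (fun y _ => g0 y).
  move=> <-.
  apply: eq_measure_integral; first exact: sref_meas.
  move=> H A mA _ /=; exact: (esym (lebesgue_sref _ mA)).
rewrite integralE [X in _ = X]integralE.
rewrite E1; last 2 first.
- exact/measurable_funepos.
- by move=> y; exact: funepos_ge0.
rewrite E1; last 2 first.
- exact/measurable_funeneg.
- by move=> y; exact: funeneg_ge0.
by rewrite (funepos_comp f sref) (funeneg_comp f sref).
Qed.

Lemma refl_deriv1 (g : R -> R) (k : R) x :
  derivable g (1 - x) 1 ->
  derivable (fun y : R => k * g (1 - y)) x 1 /\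
  derive1 (fun y : R => k * g (1 - y)) x = k * (-1) * derive1 g (1 - x).
Proof.
move=> dg.
have ds : derivable (fun y : R => 1 - y) x 1.
  by apply: derivableB => //; exact: derivable_id.
have dkg : derivable (fun y : R => k * g y) (1 - x) 1.
  by apply: derivableM => //; exact: derivable_cst.
have -> : (fun y : R => k * g (1 - y)) = (fun y : R => k * g y) \o (fun y => 1 - y) by [].
split; first by apply/derivable1_diffP; apply: differentiable_comp; apply/derivable1_diffP.
rewrite derive1_comp // derive1Ml // [X in _ * X]derive1E.
have hs : is_derive x (1:R) (fun y : R => 1 - y) (0 - 1).
  have h : is_derive x (1:R) (cst (1:R) - id) (0 - 1) by apply: is_deriveB.
  exact: h.
rewrite (@derive_val _ _ _ _ _ _ _ hs); ring.
Qed.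

Lemma refl_derive1n (psi : R -> R) (c : R) :
  (forall n x, derivable (derive1n n psi) x 1) ->
  forall n, derive1n n (fun y : R => c * psi (1 - y)) =
            (fun y : R => c * (-1) ^+ n * derive1n n psi (1 - y)).
Proof.
move=> dpsi; elim=> [|n IH].
  by rewrite !derive1n0; apply/funext => y; rewrite expr0 mulr1.
rewrite derive1nS IH; apply/funext => x.
have [_ ->] := refl_deriv1 _ (c * (-1) ^+ n) _ (dpsi n (1 - x)).
by rewrite derive1nS exprS; ring.
Qed.

Lemma sref_sref x : sref (sref x) = x.
Proof. by rewrite /sref subKr. Qed.

Lemma test_fun_sref (psi : R -> R) (c : R) : test_fun psi ->
  test_fun (fun y : R => c * psi (1 - y)).
Proof.
move=> [dpsi [M HM]]; split.
  move=> n x; rewrite refl_derive1n //.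
  by have [] := refl_deriv1 _ (c * (-1) ^+ n) _ (dpsi n (1 - x)).
exists (M + 1) => x Hx; rewrite HM ?mulr0 //.
have : `|x| <= `|1 - x| + 1.
  by rewrite -[X in `|X|](subKr 1 x) (le_trans (ler_normB _ _)) // normr1 addrC.
move=> h; rewrite -(ltrD2r 1); exact: (lt_le_trans Hx h).
Qed.


Lemma li_sref (f : R -> R) : locally_integrable setT f ->
  locally_integrable setT (fun x => f (sref x)).
Proof.
move=> [mf oT fK]; split => //.
  exact: (measurableT_comp mf sref_meas).
move=> K _ cK.
have cs : continuous sref.
  by move=> x; apply: continuousB; [exact: cvg_cst|exact: cvg_id].
have cK' : compact (sref @^-1` K).
  have -> : sref @^-1` K = sref @` K.
    apply/seteqP; split => x /=.
      by move=> Kx; exists (sref x) => //; rewrite sref_sref.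
    by move=> [y Ky <-]; rewrite sref_sref.
  by apply: continuous_compact => //; apply: continuous_subspaceT.
have := fK _ (subsetT _) cK'.
rewrite (@integral_sref _ (fun x => `|f x|%:E)); last 2 first.
- exact: compact_measurable.
- by apply/measurable_EFinP; apply: measurableT_comp.
suff -> : sref @^-1` (sref @^-1` K) = K by [].
by apply/seteqP; split => x /=; rewrite sref_sref.
Qed.

Lemma ae_sref (P Q : R -> Prop) : {ae mu, forall x, P x} ->
  (forall x, x <> 0 -> x <> 1 -> P (sref x) -> Q x) -> {ae mu, forall x, Q x}.
Proof.
move=> [N [mN N0 sub]] PQ.
have n1 : mu.-negligible (sref @^-1` N).
  exists (sref @^-1` N); split => //.
    by have := sref_meas measurableT _ mN; rewrite setTI.
  by have := lebesgue_sref _ mN; rewrite /pushforward => ->.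
have n2 (a : R) : mu.-negligible [set a].
  by exists [set a]; split => //; rewrite lebesgue_measure_set1.
apply: (negligibleS _ (negligibleU n1 (negligibleU (n2 0) (n2 1)))).
move=> x /= nQ.
have [->|x0] := eqVneq x 0; first by right; left.
have [->|x1] := eqVneq x 1; first by right; right.
left; apply: sub => /= HP; apply: nQ; apply: PQ => //; exact/eqP.
Qed.


Lemma test_meas (psi : R -> R) n : test_fun psi ->
  measurable_fun [set: R] (derive1n n psi).
Proof.
move=> [d _]; apply: continuous_measurable_fun => x.
apply: differentiable_continuous; apply/derivable1_diffP; exact: d.
Qed.

Lemma int_sref (F : R -> R) : measurable_fun [set: R] F ->
  (\int[mu]_x (F x)%:E = \int[mu]_x (F (sref x))%:E)%E.
Proof.
move=> mF; rewrite (integral_sref setT (fun x => (F x)%:E)) ?preimage_setT //.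
exact/measurable_EFinP.
Qed.

Lemma weak1_sref (phi g : R -> R) :
  measurable_fun [set: R] phi -> measurable_fun [set: R] g ->
  weak_deriv1 phi g ->
  weak_deriv1 (fun x => phi (sref x)) (fun x => - g (sref x)).
Proof.
move=> mphi mg H psi tpsi.
have tchi := test_fun_sref _ (-1) tpsi.
have dpsi : forall n x, derivable (derive1n n psi) x 1 by case: tpsi.
have := H _ tchi; rewrite refl_derive1n // => E.
rewrite int_sref; last first.
  apply: measurable_funM; first exact: (measurableT_comp mphi sref_meas).
  exact: test_meas.
rewrite [X in (_ = - X)%E]int_sref; last first.
  apply: measurable_funM; last exact: (test_meas _ 0 tpsi).
  by apply: measurable_funN; exact: (measurableT_comp mg sref_meas).
under eq_integral do rewrite sref_sref.
under [X in (_ = - X)%E]eq_integral do rewrite sref_sref.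
have -> : (\int[mu]_x (phi x * derive1n 1 psi (sref x))%:E =
          \int[mu]_x (phi x * ((-1) * (-1) ^+ 1 * derive1n 1 psi (1 - x)))%:E)%E.
  by apply: eq_integral => x _; congr (_%:E); rewrite /sref; ring.
rewrite E; congr (- _)%E.
by apply: eq_integral => x _; congr (_%:E); rewrite /sref; ring.
Qed.

Lemma weak2_sref (phi g : R -> R) :
  measurable_fun [set: R] phi -> measurable_fun [set: R] g ->
  weak_deriv2 phi g ->
  weak_deriv2 (fun x => phi (sref x)) (fun x => g (sref x)).
Proof.
move=> mphi mg H psi tpsi.
have tchi := test_fun_sref _ 1 tpsi.
have dpsi : forall n x, derivable (derive1n n psi) x 1 by case: tpsi.
have := H _ tchi; rewrite refl_derive1n // => E.
rewrite int_sref; last first.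
  apply: measurable_funM; first exact: (measurableT_comp mphi sref_meas).
  exact: test_meas.
rewrite [X in _ = X]int_sref; last first.
  apply: measurable_funM; last exact: (test_meas _ 0 tpsi).
  exact: (measurableT_comp mg sref_meas).
under eq_integral do rewrite sref_sref.
under [X in _ = X]eq_integral do rewrite sref_sref.
have -> : (\int[mu]_x (phi x * derive1n 2 psi (sref x))%:E =
          \int[mu]_x (phi x * (1 * (-1) ^+ 2 * derive1n 2 psi (1 - x)))%:E)%E.
  by apply: eq_integral => x _; congr (_%:E); rewrite /sref; ring.
rewrite E.
by apply: eq_integral => x _; congr (_%:E); rewrite /sref; ring.
Qed.


Lemma m_ab_sref (r2 a b x : R) : x <> 0 -> x <> 1 ->
  m_ab r2 a b (sref x) = m_ab r2 b a x.
Proof.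
rewrite /m_ab /sref => x0 x1.
have [h0|h0|h0] := ltgtP x 0; last by exfalso.
- rewrite ifF; last by apply/negbTE; rewrite -leNgt; lra.
  by rewrite ifF //; apply/negbTE; rewrite -leNgt; lra.
- have [h1|h1|h1] := ltgtP x 1; last by exfalso.
  + rewrite ifF; last by apply/negbTE; rewrite -leNgt; lra.
    by have -> : 1 - x < 1 by lra.
  + by have -> : 1 - x < 0 by lra.
Qed.

Lemma admissible_sref (r2 L a b lam : R) :
  admissible r2 L a b lam -> admissible r2 L b a lam.
Proof.
move=> [phi [phi2 [cphi [pphi [[liphi [[phi1 [liphi1 w1]] [liphi2 w2]]] hae]]]]].
have cs : continuous sref.
  by move=> x; apply: continuousB; [exact: cvg_cst|exact: cvg_id].
exists (fun x => phi (sref x)), (fun x => phi2 (sref x)); split.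
  by move=> x; apply: continuous_comp; [exact: cs|exact: cphi].
split; first by move=> x; exact: pphi.
split.
  split; first exact: li_sref.
  split.
    exists (fun x => - phi1 (sref x)); split.
      exact: (locally_integrableN (li_sref _ liphi1)).
    by apply: weak1_sref => //; [case: liphi|case: liphi1].
  split; first exact: li_sref.
  by apply: weak2_sref => //; [case: liphi|case: liphi2].
apply: (ae_sref _ _ hae) => x x0 x1 /=.
by rewrite m_ab_sref.
Qed.

End S.


Theorem proposition4p3 (R : realType) (r1 r2 r3 L : R) :
  0 < r1 -> 0 < r2 -> 0 < r3 -> 0 < L -> Num.max r1 r3 < r2 ->
  lambda1 r2 L r1 r3 = lambda1 r2 L r3 r1.
Proof.
move=> _ _ _ _ _; rewrite /lambda1; congr ereal_sup.
apply/seteqP; split => _ [lam h <-]; exists lam => //; exact: admissible_sref.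
Qed.
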